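(* Let $k,n$ be positive integers and suppose there exist complex $k\times n$ matrices $A_1,\dots,A_k$ such that $A_iA_i^t=I_k$ for every $i\in[k]$ and $A_iA_j^t=-A_jA_i^t$ for all distinct $i,j\in[k]$. Then there exists an anticommuting family $e_1,\dots,e_k\in\mathbb{C}^{(n+2k)\times(n+2k)}$ such that $\mathrm{rk}(e_i^2)=k$ for every $i$, $e_1^2=e_2^2=\dots=e_k^2$, and $e_i^3=0$ for every $i$.
   Context: A family $e_1,\dots,e_k$ of complex square matrices is called anticommuting if $e_ie_j=-e_je_i$ for all distinct $i,j$. $A^t$ denotes the transpose; $\mathrm{rk}$ is matrix rank. *)

(* Defs.v *)
From HB Require Import structures.
From mathcomp Require Import all_boot all_order all_algebra.
Set Implicit Arguments. Unset Strict Implicit. Unset Printing Implicit Defensive.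
Import GRing.Theory Num.Theory.
Local Open Scope ring_scope.

Definition anticommuting (R : pzRingType) (k m : nat) (e : 'I_k -> 'M[R]_m) : Prop :=
  forall i j : 'I_k, i != j -> e i *m e j = - (e j *m e i).

(* Main.v *)
Require Import Defs.
From HB Require Import structures.
From mathcomp Require Import all_boot all_order all_algebra.
From mathcomp Require Import zify.
Import GRing.Theory Num.Theory.
Local Open Scope ring_scope.

Definition sel (R : pzRingType) {p N : nat} (f : 'I_p -> 'I_N) : 'M[R]_(p, N) :=
  \matrix_(i, j) (f i == j)%:R.

Lemma sel_mul (R : pzRingType) p q N (f : 'I_p -> 'I_N) (g : 'I_q -> 'I_N) :
  sel R f *m (sel R g)^T = \matrix_(i, j) (f i == g j)%:R.
Proof.
apply/matrixP => i j; rewrite !mxE (bigD1 (f i)) //= big1 ?addr0.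
  by rewrite !mxE eqxx mul1r eq_sym.
by move=> l /negbTE hl; rewrite !mxE eq_sym hl mul0r.
Qed.

Lemma sel_disj (R : pzRingType) p q N (f : 'I_p -> 'I_N) (g : 'I_q -> 'I_N) :
  (forall i j, f i != g j) -> sel R f *m (sel R g)^T = 0.
Proof.
move=> h; rewrite sel_mul; apply/matrixP => i j; rewrite !mxE.
by rewrite (negbTE (h i j)).
Qed.

Lemma sel_inj (R : pzRingType) p N (f : 'I_p -> 'I_N) :
  injective f -> sel R f *m (sel R f)^T = 1%:M.
Proof.
move=> h; rewrite sel_mul; apply/matrixP => i j; rewrite !mxE.
by rewrite (inj_eq h).
Qed.

Section Abs.
Variables (R : comPzRingType) (k n N : nat).
Variables (X : 'M[R]_(N, k)) (Y : 'M[R]_(n, N)) (Y' : 'M[R]_(N, n)) (Z : 'M[R]_(k, N)).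
Hypotheses (YX : Y *m X = 0) (YY : Y *m Y' = 1%:M) (ZX : Z *m X = 0) (ZY : Z *m Y' = 0).

Definition ee (B : 'M[R]_(k, n)) := X *m B *m Y + Y' *m B^T *m Z.

Lemma ee_mul B D : ee B *m ee D = X *m (B *m D^T) *m Z.
Proof.
have yx M : Y *m (X *m M) = 0 :> 'M_(n, _) by rewrite mulmxA YX mul0mx.
have yy M : Y *m (Y' *m M) = M :> 'M_(n, _) by rewrite mulmxA YY mul1mx.
have zx M : Z *m (X *m M) = 0 :> 'M_(k, _) by rewrite mulmxA ZX mul0mx.
have zy M : Z *m (Y' *m M) = 0 :> 'M_(k, _) by rewrite mulmxA ZY mul0mx.
rewrite /ee mulmxDl !mulmxDr -!mulmxA yx zx zy yy !mulmx0 add0r addr0 addr0.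
by rewrite !mulmxA.
Qed.
End Abs.

Theorem proposition6p2 (C : numClosedFieldType) (k n : nat)
  (hk : (0 < k)%N) (hn : (0 < n)%N)
  (A : 'I_k -> 'M[C]_(k, n))
  (hA1 : forall i : 'I_k, A i *m (A i)^T = 1%:M)
  (hA2 : forall i j : 'I_k, i != j -> A i *m (A j)^T = - (A j *m (A i)^T)) :
  exists e : 'I_k -> 'M[C]_(n + 2 * k),
    [/\ anticommuting e,
        forall i : 'I_k, \rank (e i *m e i) = k,
        forall i j : 'I_k, e i *m e i = e j *m e j
      & forall i : 'I_k, e i *m e i *m e i = 0].
Proof.
pose N := (n + 2 * k)%N.
have h1 (j : 'I_k) : (j < N)%N by rewrite /N; have := ltn_ord j; lia.
have h2 (j : 'I_n) : (k + j < N)%N by rewrite /N; have := ltn_ord j; lia.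
have h3 (j : 'I_k) : (k + n + j < N)%N by rewrite /N; have := ltn_ord j; lia.
pose f1 (j : 'I_k) : 'I_N := Ordinal (h1 j).
pose f2 (j : 'I_n) : 'I_N := Ordinal (h2 j).
pose f3 (j : 'I_k) : 'I_N := Ordinal (h3 j).
pose X := (sel C f1)^T. pose Y := sel C f2. pose Y' := (sel C f2)^T.
pose Z := sel C f3.
have neq (a b : nat) : (a != b)%N -> forall (u v : 'I_N), val u = a -> val v = b -> u != v.
  by move=> hab u v hu hv; apply/eqP => huv; move: hab; rewrite -hu -hv huv eqxx.
have YX : Y *m X = 0.
  apply: sel_disj => i j; apply: (neq (k + i)%N j) => //.
  by have := ltn_ord j; apply: contraTneq => <-; lia.
have YY : Y *m Y' = 1%:M.
  by apply: sel_inj => i j /(congr1 val) /= /eqP; rewrite eqn_add2l => /eqP/val_inj.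
have ZX : Z *m X = 0.
  apply: sel_disj => i j; apply: (neq (k + n + i)%N j) => //.
  by have := ltn_ord j; apply: contraTneq => <-; lia.
have ZY : Z *m Y' = 0.
  apply: sel_disj => i j; apply: (neq (k + n + i)%N (k + j)) => //.
  by have := ltn_ord j; apply: contraTneq => /eqP; rewrite -addnA eqn_add2l => /eqP <-; lia.
have X'X : sel C f1 *m X = 1%:M.
  by apply: sel_inj => i j /(congr1 val) /= /val_inj.
have ZZ' : Z *m Z^T = 1%:M.
  by apply: sel_inj => i j /(congr1 val) /= /eqP; rewrite eqn_add2l => /eqP/val_inj.
pose e i := @ee C k n N X Y Y' Z (A i).
have em i j : e i *m e j = X *m (A i *m (A j)^T) *m Z by apply: ee_mul.
exists e; split.
- move=> i j hij; rewrite !em hA2 //.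
  by rewrite mulmxN mulNmx.
- move=> i; rewrite em hA1 mulmx1; apply/eqP; rewrite eqn_leq; apply/andP; split.
    by apply: leq_trans (mxrankM_maxl _ _) (rank_leq_col _).
  suff : (\rank (1%:M : 'M[C]_k) <= \rank (X *m Z))%N by rewrite mxrank1.
  have E : sel C f1 *m (X *m Z) *m Z^T = 1%:M by rewrite mulmxA X'X mul1mx ZZ'.
  rewrite -E; apply: leq_trans (mxrankM_maxl _ _) _; apply: mxrankM_maxr.
- by move=> i j; rewrite !em !hA1.
- move=> i; rewrite em hA1 mulmx1 /e /ee mulmxDr -!mulmxA.
  by rewrite !(mulmxA Z) ZX ZY !mul0mx !mulmx0 addr0.
Qed.
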